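(* Let $k \in \mathbb{N}$. Every linear $k$-DCFG is equivalent to (i.e. generates the same language as) some $k$-DCFG $G = \langle N, \Sigma, P, S\rangle$ all of whose rules have one of the following forms, where $A, B \in N$ and $u \in \Theta$: (1) $A \to u\cdot B$ or $A \to B \cdot u$, with $|u| \leq 1$ and $u \neq \epsilon$; (2) $A \to B \odot_j u$, with $|u| \leq 1$; (3) $A \to u$, with $|u| \leq 1$.
   Context: Fix a finite alphabet $\Sigma$; $\Sigma^*$ is the set of words over $\Sigma$ and $\epsilon$ the empty word. $\Theta_k$ is the set of tuples $(u_0,\ldots,u_k)$ with $u_i\in\Sigma^*$, and $\Theta=\bigcup_{k\in\mathbb{N}}\Theta_k$; the rank of $(u_0,\ldots,u_k)$ is $k$, and its length $|u|$ is the sum of the lengths of its components. Rank-$0$ tuples are identified with words; in particular $\epsilon$ also denotes the rank-$0$ tuple $(\epsilon)$. Concatenation $\cdot:\Theta_i\times\Theta_j\to\Theta_{i+j}$ is $(x_0,\ldots,x_i)\cdot(y_0,\ldots,y_j)=(x_0,\ldots,x_{i-1},x_iy_0,y_1,\ldots,y_j)$, and for $1\le l\le i$ intercalation $\odot_l:\Theta_i\times\Theta_j\to\Theta_{i+j-1}$ is $(x_0,\ldots,x_i)\odot_l(y_0,\ldots,y_j)=(x_0,\ldots,x_{l-2},x_{l-1}y_0,y_1,\ldots,y_{j-1},y_jx_l,x_{l+1},\ldots,x_i)$. Let $N$ be a finite set of nonterminals disjoint from $\Sigma$ with a rank function $\mathrm{rk}:N\to\mathbb{N}$. The set of $k$-correct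 terms $\mathrm{Tm}_k(N,\Sigma)$ and their ranks are defined inductively: every tuple in $\Theta_j$ with $j\le k$ is a term of rank $j$, and every nonterminal $A$ with $\mathrm{rk}(A)\le k$ is a term of rank $\mathrm{rk}(A)$; if $\alpha,\beta$ are terms with $\mathrm{rk}\,\alpha+\mathrm{rk}\,\beta\le k$ then $(\alpha\cdot\beta)$ is a term of rank $\mathrm{rk}\,\alpha+\mathrm{rk}\,\beta$; if $1\le j\le k$, $\mathrm{rk}\,\alpha\ge j$ and $\mathrm{rk}\,\alpha+\mathrm{rk}\,\beta\le k+1$ then $(\alpha\odot_j\beta)$ is a term of rank $\mathrm{rk}\,\alpha+\mathrm{rk}\,\beta-1$. A ground term is one containing no nonterminals; its value $\nu(\alpha)\in\Theta$ is obtained by interpreting $\cdot$ and $\odot_j$ as the operations above. A context $C[x]$ is a term with one leaf occurrence of a variable $x$ of some rank; $C[\beta]$ is the result of substituting a term $\beta$ of the same rank for $x$. A $k$-displacement context-free grammar ($k$-DCFG) is $G=\langle N,\Sigma,P,S\rangle$ where $S\in N$ has rank $0$ and $P$ is a finite set of rules $A\to\alpha$ with $A\in N$, $\alpha\in\mathrm{Tm}_k(N,\Sigma)$ and $\mathrm{rk}(A)=\mathrm{rk}(\alpha)$. Standing assumption: all tuples occurring as leaves of right-hand sides of rules have length at most $1$. Derivability $\vdash_G$ is the smallest reflexive transitive relation between nonterminals and terms such that $(B\to\beta)\in P$ and $A\vdash_G C[B]$ imply $A\vdash_G C[\beta]$ for any context $C$. $L_G(A)=\{\nu(\alpha)\mid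 A\vdash_G\alpha,\ \alpha \text{ ground}\}$ and $L(G)=L_G(S)$. Two grammars are equivalent if they generate the same language. A term is linear if it contains at most one occurrence of a nonterminal; a grammar is linear if the right-hand sides of all its rules are linear. All right-hand sides in the claim are required to be $k$-correct terms of the same rank as the left-hand side. *)

(* Defs.v *)
From Stdlib Require List.
From mathcomp Require Import all_boot.
Set Implicit Arguments. Unset Strict Implicit. Unset Printing Implicit Defensive.

Section DCFG.
Variable Sigma : finType.

(* A word is a seq Sigma; a tuple (u_0,...,u_k) is the list [:: u_0; ...; u_k]
   (well-formed iff nonempty). *)
Definition word := seq Sigma.
Definition tup := seq word.

Definition tup_wf (u : tup) : bool := 0 < size u.
Definition trank (u : tup) : nat := (size u).-1.
Definition tlen (u : tup) : nat := sumn (map size u).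
Definition teps : tup := [:: [::]].

(* concatenation (x_0..x_i).(y_0..y_j) = (x_0..x_{i-1}, x_i y_0, y_1..y_j) *)
Definition tcat (x y : tup) : tup :=
  take (size x).-1 x ++ (last [::] x ++ head [::] y) :: behead y.

(* intercalation x (.)_l y = (x_0..x_{l-1}) . y . (x_l..x_i), which unfolds to
   (x_0..x_{l-2}, x_{l-1} y_0, y_1..y_{j-1}, y_j x_l, x_{l+1}..x_i) *)
Definition tintc (l : nat) (x y : tup) : tup :=
  tcat (tcat (take l x) y) (drop l x).

Variable N : finType.
Variable rk : N -> nat.

Inductive term : Type :=
| Tup of tup
| NT of N
| Cat of term & term
| Intc of nat & term & term.

Fixpoint rank (t : term) : nat :=
  match t with
  | Tup u => trank u
  | NT A => rk A
  | Cat a b => rank a + rank b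
  | Intc _ a b => rank a + rank b - 1
  end.

Fixpoint correct (k : nat) (t : term) : bool :=
  match t with
  | Tup u => tup_wf u && (trank u <= k)
  | NT A => rk A <= k
  | Cat a b => [&& correct k a, correct k b & rank a + rank b <= k]
  | Intc j a b => [&& correct k a, correct k b, 1 <= j <= k, j <= rank a
                    & rank a + rank b <= k.+1]
  end.

Fixpoint eval (t : term) : option tup :=
  match t with
  | Tup u => Some u
  | NT _ => None
  | Cat a b => match eval a, eval b with
               | Some x, Some y => Some (tcat x y) | _, _ => None end
  | Intc j a b => match eval a, eval b with
               | Some x, Some y => Some (tintc j x y) | _, _ => None end
  end.

Fixpoint nnt (t : term) : nat :=
  match t with
  | Tup _ => 0
  | NT _ => 1
  | Cat a b => nnt a + nnt b
  | Intc _ a b => nnt a + nnt b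
  end.

Fixpoint leaves_short (t : term) : bool :=
  match t with
  | Tup u => tlen u <= 1
  | NT _ => true
  | Cat a b => leaves_short a && leaves_short b
  | Intc _ a b => leaves_short a && leaves_short b
  end.

Variable P : seq (N * term).

Inductive step : term -> term -> Prop :=
| step_rule B beta : List.In (B, beta) P -> step (NT B) beta
| step_catl a a' b : step a a' -> step (Cat a b) (Cat a' b)
| step_catr a b b' : step b b' -> step (Cat a b) (Cat a b')
| step_intl j a a' b : step a a' -> step (Intc j a b) (Intc j a' b)
| step_intr j a b b' : step b b' -> step (Intc j a b) (Intc j a b').

Inductive derives (A : N) : term -> Prop :=
| der_refl : derives A (NT A)
| der_step t t' : derives A t -> step t t' -> derives A t'.

End DCFG.
Arguments Tup {Sigma N}.
Arguments NT {Sigma N}.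
Arguments Cat {Sigma N}.
Arguments Intc {Sigma N}.
Arguments teps {Sigma}.

Record dcfg (Sigma : finType) := Dcfg {
  nt : finType;
  nrk : nt -> nat;
  rules : seq (nt * term Sigma nt);
  start : nt }.

Definition is_kdcfg (Sigma : finType) (k : nat) (G : dcfg Sigma) : Prop :=
  nrk (start G) = 0 /\
  forall r, List.In r (rules G) ->
    [/\ correct (@nrk Sigma G) k r.2, rank (@nrk Sigma G) r.2 = nrk r.1
      & leaves_short r.2].

Definition linear_dcfg (Sigma : finType) (G : dcfg Sigma) : Prop :=
  forall r, List.In r (rules G) -> nnt r.2 <= 1.

Definition language (Sigma : finType) (G : dcfg Sigma) (w : tup Sigma) : Prop :=
  exists t, derives (rules G) (start G) t /\ eval t = Some w.

Definition normal_rule (Sigma : finType) (N : finType)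
  (r : N * term Sigma N) : Prop :=
  (exists B u, (r.2 = Cat (Tup u) (NT B) \/ r.2 = Cat (NT B) (Tup u))
               /\ tlen u <= 1 /\ u <> teps)
  \/ (exists B j u, r.2 = Intc j (NT B) (Tup u) /\ tlen u <= 1)
  \/ (exists u, r.2 = Tup u /\ tlen u <= 1).

(* Main.v *)
Require Import Defs.
From Stdlib Require List.
From mathcomp Require Import all_boot zify.
Set Implicit Arguments. Unset Strict Implicit. Unset Printing Implicit Defensive.

Section Gen.
Variables (Sigma N : finType) (P : seq (N * term Sigma N)).

Fixpoint valg (g : N -> tup Sigma -> Prop) (t : term Sigma N) (w : tup Sigma) : Prop :=
  match t with
  | Tup u => w = u
  | NT C => g C w
  | Cat a b => exists x y, valg g a x /\ valg g b y /\ w = tcat x y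
  | Intc j a b => exists x y, valg g a x /\ valg g b y /\ w = tintc j x y
  end.

Fixpoint genN n A w : Prop :=
  match n with 0 => False
  | n'.+1 => exists b, List.In (A, b) P /\ valg (genN n') b w end.

Definition gen A w := exists n, genN n A w.

Lemma valg_mono (g g' : N -> tup Sigma -> Prop) :
  (forall C x, g C x -> g' C x) -> forall t w, valg g t w -> valg g' t w.
Proof.
move=> H; elim=> [u|C|a IHa b IHb|j a IHa b IHb] w //=; first exact: H.
  by case=> [x [y [Ha [Hb ->]]]]; exists x, y; split; [exact: IHa|split; [exact: IHb|]].
by case=> [x [y [Ha [Hb ->]]]]; exists x, y; split; [exact: IHa|split; [exact: IHb|]].
Qed.

Lemma genN_S n A w : genN n A w -> genN n.+1 A w.
Proof.
elim: n A w => [//|n IH] A w /= [b [Hin Hv]]; exists b; split=> //.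
exact: (valg_mono IH).
Qed.

Lemma genN_mono n m A w : n <= m -> genN n A w -> genN m A w.
Proof.
move=> le; elim: m le => [|m IH]; first by rewrite leqn0 => /eqP ->.
rewrite leq_eqVlt => /orP [/eqP -> //|lt] H; apply: genN_S; exact: IH.
Qed.

Lemma valg_gen t w : valg gen t w -> exists n, valg (genN n) t w.
Proof.
elim: t w => [u|C|a IHa b IHb|j a IHa b IHb] w /=.
- by move=> ->; exists 0.
- by [].
- case=> [x [y [/IHa [n1 H1] [/IHb [n2 H2] ->]]]]; exists (maxn n1 n2), x, y.
  split; [apply: (valg_mono _ H1) | split; [apply: (valg_mono _ H2)|]] => // C z;
  apply: genN_mono; lia.
- case=> [x [y [/IHa [n1 H1] [/IHb [n2 H2] ->]]]]; exists (maxn n1 n2), x, y.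
  split; [apply: (valg_mono _ H1) | split; [apply: (valg_mono _ H2)|]] => // C z;
  apply: genN_mono; lia.
Qed.

Lemma gen_rule A b w : List.In (A, b) P -> valg gen b w -> gen A w.
Proof. by move=> Hin /valg_gen [n H]; exists n.+1, b. Qed.

Lemma step_back t t' : step P t t' -> forall w, valg gen t' w -> valg gen t w.
Proof.
elim=> {t t'}.
- move=> B b Hin w H; exact: gen_rule Hin H.
- move=> a a' b _ IH w /= [x [y [H1 [H2 ->]]]]; exists x, y; split=> //; exact: IH.
- move=> a b b' _ IH w /= [x [y [H1 [H2 ->]]]]; exists x, y; split=> //; split=> //; exact: IH.
- move=> j a a' b _ IH w /= [x [y [H1 [H2 ->]]]]; exists x, y; split=> //; exact: IH.
- move=> j a b b' _ IH w /= [x [y [H1 [H2 ->]]]]; exists x, y; split=> //; split=> //; exact: IH.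
Qed.

Lemma eval_valg g t w : eval t = Some w -> valg g t w.
Proof.
elim: t w => [u|C|a IHa b IHb|j a IHa b IHb] w //=; first by case=> ->.
- case Ea: (eval a) => [x|//]; case Eb: (eval b) => [y|//] [<-].
  by exists x, y; split; [exact: IHa|split; [exact: IHb|]].
- case Ea: (eval a) => [x|//]; case Eb: (eval b) => [y|//] [<-].
  by exists x, y; split; [exact: IHa|split; [exact: IHb|]].
Qed.

Lemma derives_valg A t : derives P A t -> forall w, valg gen t w -> gen A w.
Proof.
elim=> [|t1 t2 _ IH Hs] w /= Hv; first by []. apply: IH. exact: (step_back Hs Hv).
Qed.

Inductive ms : term Sigma N -> term Sigma N -> Prop :=
| ms0 t : ms t t
| msS t t' t'' : step P t t' -> ms t' t'' -> ms t t''.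

Lemma ms_trans t1 t2 t3 : ms t1 t2 -> ms t2 t3 -> ms t1 t3.
Proof. by elim=> // t t' t'' Hs _ IH H; apply: msS Hs (IH H). Qed.

Lemma ms_catl a a' b : ms a a' -> ms (Cat a b) (Cat a' b).
Proof. elim=> [t|t t' t'' Hs _ IH]; [exact: ms0|apply: msS IH; exact: step_catl]. Qed.
Lemma ms_catr a b b' : ms b b' -> ms (Cat a b) (Cat a b').
Proof. elim=> [t|t t' t'' Hs _ IH]; [exact: ms0|apply: msS IH; exact: step_catr]. Qed.
Lemma ms_intl j a a' b : ms a a' -> ms (Intc j a b) (Intc j a' b).
Proof. elim=> [t|t t' t'' Hs _ IH]; [exact: ms0|apply: msS IH; exact: step_intl]. Qed.
Lemma ms_intr j a b b' : ms b b' -> ms (Intc j a b) (Intc j a b').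
Proof. elim=> [t|t t' t'' Hs _ IH]; [exact: ms0|apply: msS IH; exact: step_intr]. Qed.

Lemma valg_ms t w :
  valg (fun C x => exists t', ms (NT C) t' /\ eval t' = Some x) t w ->
  exists t', ms t t' /\ eval t' = Some w.
Proof.
elim: t w => [u|C|a IHa b IHb|j a IHa b IHb] w //=.
- by move=> ->; exists (Tup u); split; [exact: ms0|].
- case=> [x [y [/IHa [ta [Ha Ea]] [/IHb [tb [Hb Eb]] ->]]]].
  exists (Cat ta tb); split; last by rewrite /= Ea Eb.
  exact: ms_trans (ms_catl _ Ha) (ms_catr _ Hb).
- case=> [x [y [/IHa [ta [Ha Ea]] [/IHb [tb [Hb Eb]] ->]]]].
  exists (Intc j ta tb); split; last by rewrite /= Ea Eb.
  exact: ms_trans (ms_intl _ _ Ha) (ms_intr _ _ Hb).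
Qed.

Lemma genN_ms n A w : genN n A w -> exists t, ms (NT A) t /\ eval t = Some w.
Proof.
elim: n A w => [//|n IH] A w /= [b [Hin Hv]].
have [t [Ht Et]] := valg_ms (valg_mono IH Hv).
by exists t; split=> //; apply: msS Ht; exact: step_rule.
Qed.

Lemma ms_derives A t0 t : ms t0 t -> derives P A t0 -> derives P A t.
Proof. elim=> // t1 t2 t3 Hs _ IH H; apply: IH; exact: der_step H Hs. Qed.

Lemma lang_gen A w : (exists t, derives P A t /\ eval t = Some w) <-> gen A w.
Proof.
split.
- case=> t [Hd He]; apply: derives_valg Hd _ _; exact: eval_valg.
- case=> n /genN_ms [t [Hm He]]; exists t; split=> //.
  apply: ms_derives Hm _; exact: der_refl.
Qed.

End Gen.
Section Tok.
Variable Sigma : finType.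
Notation tup := (tup Sigma).

Inductive xtok := XL of Sigma | XS | XH.

Definition isS (c : xtok) := if c is XS then true else false.
Definition isH (c : xtok) := if c is XH then true else false.
Definition isL (c : xtok) := if c is XL _ then true else false.
Definition cS s := count isS s.
Definition cH s := count isH s.
Definition cL s := count isL s.

Lemma cS_cat s t : cS (s ++ t) = cS s + cS t. Proof. exact: count_cat. Qed.
Lemma cH_cat s t : cH (s ++ t) = cH s + cH t. Proof. exact: count_cat. Qed.
Lemma cL_cat s t : cL (s ++ t) = cL s + cL t. Proof. exact: count_cat. Qed.
Lemma cS_map (w : seq Sigma) : cS (map XL w) = 0. Proof. by elim: w. Qed.
Lemma cH_map (w : seq Sigma) : cH (map XL w) = 0. Proof. by elim: w. Qed.

Fixpoint dec (s : seq xtok) : tup :=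
  match s with
  | [::] => [:: [::]]
  | XL a :: s' => let d := dec s' in (a :: head [::] d) :: behead d
  | XS :: s' => [::] :: dec s'
  | XH :: s' => dec s'
  end.

Lemma dec_nil s : dec s != [::].
Proof. by elim: s => [|[a| |] s IH] //=. Qed.

Lemma size_dec s : size (dec s) = (cS s).+1.
Proof.
elim: s => [|[a| |] s IH] //=; last by rewrite IH.
by case: (dec s) IH (dec_nil s) => [|d0 dr] //= ->.
Qed.

Lemma tcat1 (y : tup) : y != [::] -> tcat [:: [::]] y = y.
Proof. by case: y. Qed.

Lemma tcat_cons (x : seq Sigma) xs (y : tup) : xs != [::] -> tcat (x :: xs) y = x :: tcat xs y.
Proof. by case: xs => [//|x1 xs] _; rewrite /tcat /=. Qed.

Lemma dec_cat s t : dec (s ++ t) = tcat (dec s) (dec t).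
Proof.
elim: s => [|[a| |] s IH] /=.
- by rewrite tcat1 // dec_nil.
- rewrite IH; case: (dec s) (dec_nil s) => [//|d0 [|d1 dr]] _.
  + by rewrite /tcat /=.
  + by rewrite /= !(@tcat_cons _ (d1 :: dr)).
- by rewrite IH tcat_cons // dec_nil.
- exact: IH.
Qed.

Lemma take_last (x : seq Sigma) (s : tup) : take (size s) (x :: s) ++ [:: last x s] = x :: s.
Proof. by elim: s x => [|y s IH] x //=; rewrite IH. Qed.

Lemma tcat_sep (x z : tup) : x != [::] -> tcat x ([::] :: z) = x ++ z.
Proof.
case: x => [//|x0 x] _; rewrite /tcat /= cats0.
by rewrite -(cat1s (last x0 x)) catA take_last.
Qed.

Lemma dec_sep s t : dec (s ++ XS :: t) = dec s ++ dec t.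
Proof. by rewrite dec_cat /= tcat_sep // dec_nil. Qed.

Lemma dec_TI s1 s2 t :
  tintc (cS s1).+1 (dec (s1 ++ XS :: s2)) (dec t) = dec (s1 ++ t ++ s2).
Proof.
rewrite dec_sep /tintc -size_dec take_size_cat // drop_size_cat //.
by rewrite catA !dec_cat.
Qed.

Lemma dec_map (w : seq Sigma) : dec (map XL w) = [:: w].
Proof. by elim: w => [|a w IH] //=; rewrite IH. Qed.

Lemma dec_mapS (w : seq Sigma) s : dec (map XL w ++ XS :: s) = w :: dec s.
Proof. by rewrite dec_sep dec_map. Qed.

Fixpoint fill (T : seq xtok) (x : tup) : seq xtok :=
  match T with
  | [::] => [::]
  | XH :: T' => map XL (head [::] x) ++ fill T' (behead x)
  | c :: T' => c :: fill T' x
  end.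

Lemma fill_cat p q x : fill (p ++ q) x = fill p x ++ fill q (drop (cH p) x).
Proof.
elim: p x => [|[a| |] p IH] x /=; rewrite ?drop0 // ?IH //.
by rewrite -catA add1n -drop1 drop_drop addnC.
Qed.

Lemma fill_noH T x : cH T = 0 -> fill T x = T.
Proof. by elim: T => [|[a| |] T IH] //= H; rewrite IH. Qed.

Lemma cS_fill T x : cS (fill T x) = cS T.
Proof.
elim: T x => [|[a| |] T IH] x //=; rewrite ?IH //.
by rewrite cS_cat cS_map IH.
Qed.

Fixpoint idT r := match r with 0 => [:: XH] | r'.+1 => XH :: XS :: idT r' end.

Lemma cS_idT r : cS (idT r) = r.
Proof. by elim: r => //= r ->. Qed.
Lemma cH_idT r : cH (idT r) = r.+1.
Proof. by elim: r => //= r ->. Qed.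

Lemma dec_idT r (x : tup) : size x = r.+1 -> dec (fill (idT r) x) = x.
Proof.
elim: r x => [|r IH] [|x0 x] //=.
- by case: x => //= _; rewrite cats0 dec_map.
- by case=> Hs; rewrite dec_mapS IH.
Qed.

Fixpoint enc (u : tup) : seq xtok :=
  match u with
  | [::] => [::]
  | w :: ws => match ws with [::] => map XL w | _ => map XL w ++ XS :: enc ws end
  end.

Lemma enc_spec u : u != [::] -> [/\ dec (enc u) = u, cS (enc u) = trank u & cH (enc u) = 0].
Proof.
elim: u => [//|w ws IH] _ /=.
have cSm : forall w : seq Sigma, cS (map XL w) = 0 by elim=> //.
have cHm : forall w : seq Sigma, cH (map XL w) = 0 by elim=> //.
case: ws IH => [|w1 ws] IH.
- by rewrite dec_map cSm cHm.
- have [H1 H2 H3] := IH isT.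
  rewrite dec_mapS H1 /cS /cH !count_cat -/(cS _) -/(cH _) /= -/(cS _) -/(cH _).
  by rewrite H2 H3 cSm cHm /trank /=.
Qed.

Fixpoint repl (j : nat) (s t : seq xtok) : seq xtok :=
  match s with
  | [::] => [::]
  | XS :: s' => if j == 1 then t ++ s' else XS :: repl j.-1 s' t
  | c :: s' => c :: repl j s' t
  end.

Lemma repl_spec j s t : 1 <= j <= cS s ->
  exists p q, [/\ s = p ++ XS :: q, cS p = j.-1 & repl j s t = p ++ t ++ q].
Proof.
elim: s j => [|[a| |] s IH] j //=.
- by move=> /andP []; rewrite /cS /=; case: j.
- move=> /IH [p [q [-> H2 ->]]]; by exists (XL a :: p), q.
- case: (eqVneq j 1) => [-> _|ne Hj]; first by exists [::], s.
  have /IH [p [q [-> H2 ->]]] : 1 <= j.-1 <= cS s by move: Hj ne; rewrite /cS; lia.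
  exists (XS :: p), q; split=> //=; rewrite -/(cS p) H2; lia.
- move=> /IH [p [q [-> H2 ->]]]; by exists (XH :: p), q.
Qed.

Lemma tlen_dec s : tlen (dec s) = cL s.
Proof.
rewrite /tlen; elim: s => [|[a| |] s IH] //=.
by case: (dec s) (dec_nil s) IH => [|d0 dr] //= _ <-.
Qed.

End Tok.
Arguments XS {Sigma}. Arguments XH {Sigma}.

Section Tmpl.
Variables (Sigma N : finType) (rk : N -> nat).
Notation tup := (tup Sigma).
Notation term := (term Sigma N).

Fixpoint hole (t : term) : option N :=
  match t with
  | Tup _ => None
  | NT B => Some B
  | Cat a b => if hole a is Some B then Some B else hole b
  | Intc _ a b => if hole a is Some B then Some B else hole b
  end.

Fixpoint tmpl (t : term) : seq (xtok Sigma) :=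
  match t with
  | Tup u => enc u
  | NT B => idT Sigma (rk B)
  | Cat a b => tmpl a ++ tmpl b
  | Intc j a b => repl j (tmpl a) (tmpl b)
  end.

Definition hcnt (h : option N) := if h is Some B then (rk B).+1 else 0.

Definition Mg (g : N -> tup -> Prop) (h : option N) (T : seq (xtok Sigma)) (w : tup) :=
  exists x, (match h with Some B => g B x /\ size x = (rk B).+1 | None => x = [::] end)
            /\ w = dec (fill T x).

Lemma tmpl_props k t : correct rk k t -> nnt t <= 1 ->
  [/\ cS (tmpl t) = rank rk t, cH (tmpl t) = hcnt (hole t),
      (if hole t is Some B then rk B <= k else True)
    & (nnt t = 0 -> hole t = None)].
Proof.
elim: t => [u|B|a IHa b IHb|j a IHa b IHb] /=.
- by case/andP=> wf _ _; have /enc_spec [_ -> ->] : u != [::] by case: u wf.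
- by move=> Hk _; rewrite cS_idT cH_idT.
- case/and3P=> ca cb hk hn.
  have [Sa Ha Ka Na] := IHa ca (leq_trans (leq_addr _ _) hn).
  have [Sb Hb Kb Nb] := IHb cb (leq_trans (leq_addl _ _) hn).
  rewrite cS_cat cH_cat Sa Sb Ha Hb; split=> //.
  + case E: (nnt a) hn => [|na] hn.
    * by rewrite Na.
    * have E2 : nnt b = 0 by lia.
      by rewrite (Nb E2) /= addn0; case: (hole a).
  + by case: (hole a) Ka.
  + by move=> H0; rewrite Na ?Nb //; lia.
- case/and5P=> ca cb /andP [j1 jk] ja hk hn.
  have [Sa Ha Ka Na] := IHa ca (leq_trans (leq_addr _ _) hn).
  have [Sb Hb Kb Nb] := IHb cb (leq_trans (leq_addl _ _) hn).
  have /(repl_spec (tmpl b)) [p [q [Ep Cp ->]]] : 1 <= j <= cS (tmpl a) by rewrite Sa j1 ja.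
  move: Sa Ha; rewrite Ep !cS_cat !cH_cat /= => Sa Ha.
  split.
  + rewrite Sb; lia.
  + rewrite Hb; case E: (nnt a) hn => [|na] hn.
    * rewrite Na // /= in Ha *; lia.
    * have E2 : nnt b = 0 by lia.
      rewrite (Nb E2); case: (hole a) Ha => [B|] Ha; rewrite /hcnt /= in Ha *; lia.
  + by case: (hole a) Ka.
  + by move=> H0; rewrite Na ?Nb //; lia.
Qed.

Lemma Mg_ground g T y : cH T = 0 -> (Mg g None T y <-> y = dec T).
Proof.
move=> H; split; first by case=> x [-> ->]; rewrite fill_noH.
by move=> ->; exists [::]; rewrite fill_noH.
Qed.

Lemma tmpl_sem k g t w : correct rk k t -> nnt t <= 1 ->
  (forall C x, g C x -> size x = (rk C).+1) ->
  (valg g t w <-> Mg g (hole t) (tmpl t) w).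
Proof.
move=> + + Hsz; elim: t w => [u|B|a IHa b IHb|j a IHa b IHb] w /=.
- case/andP=> wf _ _; have /enc_spec [D _ H] : u != [::] by case: u wf.
  by rewrite Mg_ground // D.
- move=> _ _; split.
  + by move=> Hg; have Hs := Hsz _ _ Hg; exists w; split=> //; rewrite dec_idT.
  + by case=> x [[Hg Hs] ->]; rewrite dec_idT.
- case/and3P=> ca cb hk hn.
  have hna : nnt a <= 1 by lia.
  have hnb : nnt b <= 1 by lia.
  have [Sa Ha Ka Na] := tmpl_props ca hna.
  have [Sb Hb Kb Nb] := tmpl_props cb hnb.
  case E: (nnt a) hn => [|na] hn.
  + rewrite Na //= in Ha *.
    split.
    * case=> ya [yb [/(IHa _ ca hna) Va [/(IHb _ cb hnb) [x [Hx Ey]] ->]]].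
      rewrite (Na E) in Va; rewrite (proj1 (Mg_ground _ _ Ha) Va).
      exists x; split=> //; by rewrite Ey fill_cat Ha drop0 (fill_noH _ Ha) dec_cat.
    * case=> x [Hx ->]; exists (dec (tmpl a)), (dec (fill (tmpl b) x)).
      split; first by apply/(IHa _ ca hna); rewrite (Na E); apply/Mg_ground.
      split; first by apply/(IHb _ cb hnb); exists x.
      by rewrite fill_cat Ha drop0 (fill_noH _ Ha) dec_cat.
  + have E2 : nnt b = 0 by lia.
    rewrite Nb //= in Hb *.
    have -> : (if hole a is Some B then Some B else None) = hole a by case: (hole a).
    split.
    * case=> ya [yb [/(IHa _ ca hna) [x [Hx Ey]] [/(IHb _ cb hnb) Vb ->]]].
      rewrite (Nb E2) in Vb; rewrite (proj1 (Mg_ground _ _ Hb) Vb).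
      exists x; split=> //; by rewrite Ey fill_cat (fill_noH _ Hb) dec_cat //.
    * case=> x [Hx ->]; exists (dec (fill (tmpl a) x)), (dec (tmpl b)).
      split; first by apply/(IHa _ ca hna); exists x.
      split; first by apply/(IHb _ cb hnb); rewrite (Nb E2); apply/Mg_ground.
      by rewrite fill_cat (fill_noH _ Hb) dec_cat.
- case/and5P=> ca cb /andP [j1 jk] ja hk hn.
  have hna : nnt a <= 1 by lia.
  have hnb : nnt b <= 1 by lia.
  have [Sa Ha Ka Na] := tmpl_props ca hna.
  have [Sb Hb Kb Nb] := tmpl_props cb hnb.
  have /(repl_spec (tmpl b)) [p [q [Ep Cp ->]]] : 1 <= j <= cS (tmpl a) by rewrite Sa j1 ja.
  have Ej : j = (cS p).+1 by lia.
  case E: (nnt a) hn => [|na] hn.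
  + rewrite Na //= in Ha *.
    move: Ha; rewrite Ep cH_cat /= => Ha.
    have Hp : cH p = 0 by lia.
    have Hq : cH q = 0 by lia.
    have Ha' : cH (tmpl a) = 0 by rewrite Ep cH_cat /=; lia.
    split.
    * case=> ya [yb [/(IHa _ ca hna) Va [/(IHb _ cb hnb) [x [Hx Ey]] ->]]].
      rewrite (Na E) in Va; rewrite (proj1 (Mg_ground _ _ Ha') Va).
      exists x; split=> //; rewrite Ey Ep Ej dec_TI.
      by rewrite fill_cat Hp drop0 fill_cat (fill_noH _ Hp) (fill_noH _ Hq).
    * case=> x [Hx ->]; exists (dec (tmpl a)), (dec (fill (tmpl b) x)).
      split; first by apply/(IHa _ ca hna); rewrite (Na E); apply/Mg_ground.
      split; first by apply/(IHb _ cb hnb); exists x.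
      by rewrite Ep Ej dec_TI fill_cat Hp drop0 fill_cat (fill_noH _ Hp) (fill_noH _ Hq).
  + have E2 : nnt b = 0 by lia.
    rewrite Nb //= in Hb *.
    have -> : (if hole a is Some B then Some B else None) = hole a by case: (hole a).
    have Ef : forall x, fill (tmpl a) x = fill p x ++ XS :: fill q (drop (cH p) x).
      by move=> x; rewrite Ep fill_cat.
    have Ef2 : forall x, fill (p ++ tmpl b ++ q) x = fill p x ++ tmpl b ++ fill q (drop (cH p) x).
      by move=> x; rewrite fill_cat fill_cat (fill_noH _ Hb) Hb drop0.
    split.
    * case=> ya [yb [/(IHa _ ca hna) [x [Hx Ey]] [/(IHb _ cb hnb) Vb ->]]].
      rewrite (Nb E2) in Vb; rewrite (proj1 (Mg_ground _ _ Hb) Vb).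
      exists x; split=> //; by rewrite Ey Ef Ef2 Ej -(cS_fill p x) dec_TI //.
    * case=> x [Hx ->]; exists (dec (fill (tmpl a) x)), (dec (tmpl b)).
      split; first by apply/(IHa _ ca hna); exists x.
      split; first by apply/(IHb _ cb hnb); rewrite (Nb E2); apply/Mg_ground.
      by rewrite Ef Ef2 Ej -(cS_fill p x) dec_TI.
Qed.

End Tmpl.

Section Peel.
Variable Sigma : finType.
Notation xt := (xtok Sigma).
Notation tup := (tup Sigma).

Inductive pop := PPre of xt | PPost of xt | PMid of nat & seq xt.

Definition pre (T : seq xt) : option (pop * seq xt) :=
  match T with
  | XL a :: T' => Some (PPre (XL a), T')
  | XS :: T' => Some (PPre XS, T')
  | _ => None end.

Definition post (T : seq xt) : option (pop * seq xt) :=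
  match rev T with
  | XL a :: R => Some (PPost (XL a), rev R)
  | XS :: R => Some (PPost XS, rev R)
  | _ => None end.

Definition pc (c : xt) (r : seq xt * seq xt * seq xt) := (c :: r.1.1, r.1.2, r.2).

Fixpoint sc3 (T : seq xt) : option (seq xt * seq xt * seq xt) :=
  match T with
  | XS :: XS :: q => Some ([::], [:: XS; XS], q)
  | XL a :: XS :: q => Some ([::], [:: XL a; XS], q)
  | XS :: XL a :: q => Some ([::], [:: XS; XL a], q)
  | c :: q => omap (pc c) (sc3 q)
  | [::] => None end.

Fixpoint sc4 (T : seq xt) : option (seq xt * seq xt * seq xt) :=
  match T with
  | XH :: XH :: q => Some ([:: XH], [::], XH :: q)
  | XH :: XL a :: q => Some ([:: XH], [:: XL a], q)
  | c :: q => omap (pc c) (sc4 q)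
  | [::] => None end.

Definition peel (T : seq xt) : option (pop * seq xt) :=
  match pre T with Some r => Some r | None =>
  match post T with Some r => Some r | None =>
  match sc3 T with Some (p, v, q) => Some (PMid (cS p).+1 v, p ++ XS :: q) | None =>
  match sc4 T with Some (p, v, q) => Some (PMid (cS p).+1 v, p ++ XS :: q) | None => None
  end end end end.

Definition isPS (c : xt) := c = XS \/ exists a, c = XL a.

Lemma pre_spec T o T' : pre T = Some (o, T') -> exists c, [/\ T = c :: T', o = PPre c & isPS c].
Proof.
case: T => [|[a| |] T] //= [<- <-]; eexists; split=> //; rewrite /isPS; eauto.
Qed.

Lemma pre_none T : pre T = None -> T = [::] \/ exists R, T = XH :: R.
Proof. case: T => [|[a| |] T] //=; eauto. Qed.

Lemma post_spec T o T' : post T = Some (o, T') -> exists c, [/\ T = T' ++ [:: c], o = PPost c & isPS c].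
Proof.
rewrite /post -{2}(revK T); case: (rev T) => [|[a| |] R] //= [<- <-]; eexists;
  (split; [by rewrite rev_cons cats1| by []| rewrite /isPS; eauto]).
Qed.

Lemma post_none T : post T = None -> T = [::] \/ exists R, T = R ++ [:: XH].
Proof.
rewrite /post; case E: (rev T) => [|[a| |] R] //= _.
- by left; rewrite -(revK T) E.
- by right; exists (rev R); rewrite -(revK T) E rev_cons cats1.
Qed.

Lemma sc3_spec T p v q : sc3 T = Some (p, v, q) ->
  T = p ++ v ++ q /\ (v = [:: XS; XS] \/ exists a, v = [:: XL a; XS] \/ v = [:: XS; XL a]).
Proof.
elim: T p v q => [|c T IH] p v q //.
have gen : omap (pc c) (sc3 T) = Some (p, v, q) ->
    c :: T = p ++ v ++ q /\ (v = [:: XS; XS] \/ exists a, v = [:: XL a; XS] \/ v = [:: XS; XL a]).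
  case E: (sc3 T) => [[[p' v'] q']|] //= [<- <- <-].
  by have [-> H] := IH _ _ _ E.
case: c gen => [a| |] gen; case: T IH gen => [|[b| |] T] IH gen //=;
  try (by move=> [<- <- <-]; split=> //; eauto); exact: gen.
Qed.

Lemma sc4_spec T p v q : sc4 T = Some (p, v, q) ->
  T = p ++ v ++ q /\ exists p0, p = p0 ++ [:: XH] /\
     ((v = [::] /\ exists q0, q = XH :: q0) \/ exists a, v = [:: XL a]).
Proof.
elim: T p v q => [|c T IH] p v q //.
have gen : omap (pc c) (sc4 T) = Some (p, v, q) ->
    c :: T = p ++ v ++ q /\ exists p0, p = p0 ++ [:: XH] /\
     ((v = [::] /\ exists q0, q = XH :: q0) \/ exists a, v = [:: XL a]).
  case E: (sc4 T) => [[[p' v'] q']|] //= [<- <- <-].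
  have [-> [p0 [-> H]]] := IH _ _ _ E; split=> //; by exists (c :: p0).
case: c gen => [a| |] gen; case: T IH gen => [|[b| |] T] IH gen //=;
  try (by move=> [<- <- <-]; split=> //; exists [::]; split=> //; eauto); exact: gen.
Qed.

Definition opval (o : pop) (y : tup) : tup :=
  match o with
  | PPre c => tcat (dec [:: c]) y
  | PPost c => tcat y (dec [:: c])
  | PMid j v => tintc j y (dec v)
  end.

Lemma fill_PS c T x : isPS c -> fill (c :: T) x = c :: fill T x.
Proof. by case=> [->|[a ->]]. Qed.

Lemma cH_PS c : isPS c -> cH [:: c] = 0.
Proof. by case=> [->|[a ->]]. Qed.

Lemma peel_cases T o T' : peel T = Some (o, T') ->
  [\/ exists c, [/\ T = c :: T', o = PPre c & isPS c],
      exists c, [/\ T = T' ++ [:: c], o = PPost c & isPS c],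
      exists p v q, [/\ T = p ++ v ++ q, T' = p ++ XS :: q, o = PMid (cS p).+1 v,
                     sc3 T = Some (p, v, q) & pre T = None /\ post T = None] |
      exists p v q, [/\ T = p ++ v ++ q, T' = p ++ XS :: q, o = PMid (cS p).+1 v,
                     sc4 T = Some (p, v, q) & [/\ pre T = None, post T = None & sc3 T = None]]].
Proof.
rewrite /peel.
case E1: (pre T) => [[o1 T1]|]; first by move=> [<- <-]; apply: Or41; exact: pre_spec.
case E2: (post T) => [[o1 T1]|]; first by move=> [<- <-]; apply: Or42; exact: post_spec.
case E3: (sc3 T) => [[[p v] q]|].
  move=> [<- <-]; apply: Or43; exists p, v, q; split=> //; exact: (sc3_spec E3).1.
case E4: (sc4 T) => [[[p v] q]|] //.
move=> [<- <-]; apply: Or44; exists p, v, q; split=> //; exact: (sc4_spec E4).1.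
Qed.

Lemma mid_op (p v q : seq xt) (x : tup) : cH v = 0 ->
  dec (fill (p ++ v ++ q) x) = tintc (cS p).+1 (dec (fill (p ++ XS :: q) x)) (dec v).
Proof.
move=> Hv; rewrite fill_cat (fill_cat v) (fill_noH _ Hv) Hv drop0 fill_cat.
change (fill (XS :: q) (drop (cH p) x)) with (XS :: fill q (drop (cH p) x)).
by rewrite -(cS_fill p x) dec_TI.
Qed.

Lemma peel_op T o T' x : peel T = Some (o, T') -> dec (fill T x) = opval o (dec (fill T' x)).
Proof.
case/peel_cases.
- case=> c [-> -> Hc]; by rewrite /opval fill_PS // -cat1s dec_cat.
- case=> c [-> -> Hc]; rewrite /opval fill_cat dec_cat; congr tcat.
  by case: Hc => [->|[a ->]].
- case=> p [v [q [-> -> -> E _]]]; rewrite /opval mid_op //.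
  by have [_ [->|[a [->|->]]]] := sc3_spec E.
- case=> p [v [q [-> -> -> E _]]]; rewrite /opval mid_op //.
  by have [_ [p0 [_ [[-> _]|[a ->]]]]] := sc4_spec E.
Qed.

Lemma peel_cH T o T' : peel T = Some (o, T') -> cH T' = cH T.
Proof.
case/peel_cases.
- by case=> c [-> _ Hc]; rewrite -cat1s cH_cat (cH_PS Hc).
- by case=> c [-> _ Hc]; rewrite cH_cat (cH_PS Hc) addn0.
- case=> p [v [q [-> -> _ E _]]]; rewrite !cH_cat /=.
  by have [_ [->|[a [->|->]]]] := sc3_spec E.
- case=> p [v [q [-> -> _ E _]]]; rewrite !cH_cat /=.
  by have [_ [p0 [_ [[-> _]|[a ->]]]]] := sc4_spec E.
Qed.

Definition pat3 (c : xt) (q : seq xt) :=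
  (isS c && (isS (head XH q) || isL (head XH q))) || (isL c && isS (head XH q)).
Definition pat4 (c : xt) (q : seq xt) := isH c && (isH (head XS q) || isL (head XS q)).

Lemma sc3_cons c q : pat3 c q = false -> sc3 (c :: q) = omap (pc c) (sc3 q).
Proof. by case: c => [a| |]; case: q => [|[b| |] q]. Qed.
Lemma sc4_cons c q : pat4 c q = false -> sc4 (c :: q) = omap (pc c) (sc4 q).
Proof. by case: c => [a| |]; case: q => [|[b| |] q]. Qed.
Lemma sc3_pat c q : pat3 c q = true -> sc3 (c :: q) <> None.
Proof. by case: c => [a| |]; case: q => [|[b| |] q]. Qed.
Lemma sc4_pat c q : pat4 c q = true -> sc4 (c :: q) <> None.
Proof. by case: c => [a| |]; case: q => [|[b| |] q]. Qed.
Lemma isSome_omap (A B : Type) (f : A -> B) o : isSome (omap f o) = isSome o.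
Proof. by case: o. Qed.

Lemma sc3_cons_none (c : xt) (T : seq xt) : sc3 (c :: T) = None -> sc3 T = None.
Proof.
case E: (pat3 c T); first by move/(sc3_pat E).
by rewrite sc3_cons //; case: (sc3 T).
Qed.
Lemma sc4_cons_none (c : xt) (T : seq xt) : sc4 (c :: T) = None -> sc4 T = None.
Proof.
case E: (pat4 c T); first by move/(sc4_pat E).
by rewrite sc4_cons //; case: (sc4 T).
Qed.

Arguments sc3 : simpl never.
Arguments sc4 : simpl never.

Lemma count_bound (T : seq xt) : T <> [::] -> isH (last XS T) -> sc3 T = None ->
  cS T + ~~ isS (head XS T) + isSome (sc4 T) <= cH T.
Proof.
elim: T => [//|c R IH] _.
case: R IH => [|d R'] IH.
- by case: c => //= *; rewrite sc4_cons.
- move=> HL H3.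
  have H3' : sc3 (d :: R') = None by exact: sc3_cons_none H3.
  have ne : d :: R' <> [::] by [].
  have IH' := IH ne HL H3'.
  clear HL IH; move: IH'; rewrite /cS /cH /=.
  case: c H3 => [a| |] H3.
  + case E: (pat3 (XL a) (d :: R')); first by case: (sc3_pat E).
    rewrite (sc4_cons (c:=XL a) (q:=d :: R')) //= isSome_omap.
    by case: d E H3 H3' ne => [b| |] //= *; lia.
  + case E: (pat3 XS (d :: R')); first by case: (sc3_pat E).
    rewrite (sc4_cons (c:=XS) (q:=d :: R')) //= isSome_omap.
    by case: d E H3 H3' ne => [b| |] //= *; lia.
  + case E: (pat4 XH (d :: R')).
    * have : isSome (sc4 [:: XH, d & R']) by case: (sc4 _) (sc4_pat E).
      move=> ->; case: d E H3 H3' ne => [b| |] //= *; lia.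
    * rewrite (sc4_cons (c:=XH) (q:=d :: R')) // isSome_omap.
      by case: d E H3 H3' ne => [b| |] //= *; lia.
Qed.

Lemma peel_rank T o T' : peel T = Some (o, T') -> cS T' <= cS T \/ cS T' + 1 <= cH T.
Proof.
case/peel_cases.
- by case=> c [-> _ Hc]; left; rewrite -cat1s cS_cat; lia.
- by case=> c [-> _ Hc]; left; rewrite cS_cat; lia.
- case=> p [v [q [-> -> _ E _]]]; left; rewrite !cS_cat /=.
  by have [_ [->|[a [->|->]]]] := sc3_spec E; rewrite /cS /=; lia.
- case=> p [v [q [ET -> _ E [P1 P2 P3]]]]; right.
  have [_ [p0 [Ep Hv]]] := sc4_spec E.
  have Cv : cS v = 0 by case: Hv => [[-> _]|[a ->]].
  have HT : T <> [::] by rewrite ET Ep; case: (p0).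
  have [//|[R ER]] := pre_none P1.
  have [//|[R2 ER2]] := post_none P2.
  have HL : isH (last XS T) by rewrite ER2 last_cat.
  have Hh : ~~ isS (head XS T) by rewrite ER.
  have := count_bound HT HL P3; rewrite E Hh /=.
  rewrite ET !cS_cat /= Cv; lia.
Qed.

Fixpoint hh (T : seq xt) : nat :=
  match T with
  | XH :: ((XH :: _) as T') => (hh T').+1
  | _ :: T' => hh T'
  | [::] => 0 end.

Lemma hh_cons (c : xt) (r : seq xt) : hh (c :: r) = hh r + (isH c && isH (head XS r)).
Proof.
case: c => [a| |]; case: r => [|[b| |] r] //=; rewrite ?addn0 ?addn1 //.
Qed.

Lemma hh_cat (p s : seq xt) : hh (p ++ s) = hh p + hh s + (isH (last XS p) && isH (head XS s)).
Proof.
elim: p => [|x p IH]; first by rewrite /= addn0.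
rewrite cat_cons hh_cons IH hh_cons.
case: p IH => [|y p] IH /=; lia.
Qed.

Definition meas T := size T + cL T + 2 * hh T.

Lemma peel_meas T o T' : peel T = Some (o, T') -> meas T' < meas T.
Proof.
rewrite /meas; case/peel_cases.
- case=> c [-> _ Hc]; rewrite hh_cons /=.
  by case: Hc => [->|[a ->]] /=; rewrite /cL /=; lia.
- case=> c [-> _ Hc]; rewrite hh_cat size_cat cL_cat.
  by case: Hc => [->|[a ->]] /=; rewrite /cL /= ?andbF; lia.
- case=> p [v [q [-> -> _ E _]]]; rewrite !hh_cat !size_cat !cL_cat.
  have [_ [->|[a [->|->]]]] := sc3_spec E; rewrite /= ?andbF /cL /=; lia.
- case=> p [v [q [-> -> _ E _]]].
  have [_ [p0 [-> [[-> [q0 ->]]|[a ->]]]]] := sc4_spec E;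
    rewrite !hh_cat !size_cat !cL_cat ?last_cat /= ?andbF ?andbT /cL /=; lia.
Qed.

Lemma shape (T : seq xt) : T <> [::] -> isH (last XS T) -> sc3 T = None -> sc4 T = None ->
  (isH (head XS T) -> T = idT Sigma (cS T)) /\ (isS (head XS T) -> T = XS :: idT Sigma (cS T).-1).
Proof.
elim: T => [//|c R IH] _.
case: R IH => [|d R'] IH.
- by case: c => //= *; split.
- move=> HL H3 H4.
  have H3' : sc3 (d :: R') = None by exact: sc3_cons_none H3.
  have H4' : sc4 (d :: R') = None by exact: sc4_cons_none H4.
  have ne : d :: R' <> [::] by [].
  have [IH1 IH2] := IH ne HL H3' H4'.
  clear IH HL; case: c H3 H4 => [a| |] H3 H4; first by split.
  + split=> // _.
    case E: (pat3 XS (d :: R')); first by case: (sc3_pat E).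
    case: d E IH1 IH2 {H3 H4 H3' H4' ne} => [b| |] //= E IH1 IH2.
    by rewrite {1}IH1.
  + split=> // _.
    case E: (pat4 XH (d :: R')); first by case: (sc4_pat E).
    case: d E IH1 IH2 {H3 H4 H3' H4' ne} => [b| |] //= E IH1 IH2.
    rewrite {1}IH2 //=; by case: (count isS R') IH2.
Qed.

Inductive stp := SFin of tup | SPeel of pop & seq xt | SDone.

Definition stepT (T : seq xt) : stp :=
  if (cH T == 0) && (cL T <= 1) then SFin (dec T)
  else if peel T is Some (o, T') then SPeel o T' else SDone.

Definition nextT T := if stepT T is SPeel _ T' then T' else T.

Lemma stepT_fin T u : stepT T = SFin u -> [/\ u = dec T, cH T = 0 & cL T <= 1].
Proof.
rewrite /stepT; case: ifP => [/andP [/eqP H1 H2] [<-] //|_].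
by case: (peel T) => [[o T']|].
Qed.

Lemma stepT_peel T o T' : stepT T = SPeel o T' -> peel T = Some (o, T').
Proof.
rewrite /stepT; case: ifP => // _.
by case: (peel T) => [[o1 T1] [<- <-]|].
Qed.

Lemma stepT_done T : stepT T = SDone -> T = idT Sigma (cS T) /\ cH T = (cS T).+1.
Proof.
rewrite /stepT; case: ifP => // Hf.
case EP: (peel T) => [[o T']|] // _.
move: EP; rewrite /peel.
case E1: (pre T) => [[]|] //; case E2: (post T) => [[]|] //.
case E3: (sc3 T) => [[[]]|] //; case E4: (sc4 T) => [[[]]|] // _.
have [ET|[R ER]] := pre_none E1; first by rewrite ET in Hf.
have HT : T <> [::] by rewrite ER.
have [//|[R2 ER2]] := post_none E2.
have HL : isH (last XS T) by rewrite ER2 last_cat.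
have [S1 _] := shape HT HL E3 E4.
have -> : T = idT Sigma (cS T) by apply: S1; rewrite ER.
by rewrite cS_idT cH_idT.
Qed.

End Peel.
Arguments SDone {Sigma}.

Lemma In_mem (T : eqType) (x : T) (s : seq T) : x \in s -> List.In x s.
Proof. elim: s => [//|y s IH]; rewrite in_cons => /orP [/eqP ->|/IH H]; by [left|right]. Qed.

Lemma In_enum (T : finType) (x : T) : List.In x (enum T).
Proof. apply: In_mem; by rewrite mem_enum. Qed.

Lemma In_nth (T : Type) (s : seq T) x0 n : n < size s -> List.In (nth x0 s n) s.
Proof. elim: s n => [//|y s IH] [|n] /= H; [by left|right; exact: IH]. Qed.

Lemma nth_In (T : Type) (s : seq T) r : List.In r s -> exists n, n < size s /\ nth r s n = r.
Proof.
elim: s => [//|y s IH] /= [->|/IH [n [H1 H2]]]; first by exists 0.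
by exists n.+1.
Qed.

Lemma size_tcat (Sigma : finType) (x y : tup Sigma) : 0 < size x -> 0 < size y ->
  size (tcat x y) = size x + size y - 1.
Proof.
move=> hx hy; rewrite /tcat size_cat /= size_behead size_take.
have -> : (size x).-1 < size x by lia.
lia.
Qed.

Lemma size_tintc (Sigma : finType) j (x y : tup Sigma) : 0 < j < size x -> 0 < size y ->
  size (tintc j x y) = size x + size y - 2.
Proof.
move=> /andP [h1 h2] hy; rewrite /tintc.
have st : size (take j x) = j by rewrite size_take h2.
have sd : size (drop j x) = size x - j by rewrite size_drop.
rewrite size_tcat ?size_tcat ?st ?sd; try lia.
Qed.

Lemma correct_rank (Sigma N : finType) (rk : N -> nat) k (t : term Sigma N) :
  correct rk k t -> rank rk t <= k.
Proof.
elim: t => [u|B|a IHa b IHb|j a IHa b IHb] //=.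
- by case/andP.
- by case/and3P.
- case/and5P=> _ _ _ _ h; lia.
Qed.

Lemma valg_size (Sigma N : finType) (rk : N -> nat) k (g : N -> tup Sigma -> Prop)
  (Hg : forall C x, g C x -> size x = (rk C).+1) t w :
  correct rk k t -> valg g t w -> size w = (rank rk t).+1.
Proof.
elim: t w => [u|B|a IHa b IHb|j a IHa b IHb] w /=.
- by case/andP=> wf _ ->; rewrite /trank; case: u wf.
- by move=> _ /Hg.
- case/and3P=> ca cb _ [x [y [Hx [Hy ->]]]].
  have h1 := IHa _ ca Hx; have h2 := IHb _ cb Hy.
  rewrite size_tcat; [rewrite h1 h2; lia|by rewrite h1|by rewrite h2].
- case/and5P=> ca cb /andP [j1 jk] ja _ [x [y [Hx [Hy ->]]]].
  have h1 := IHa _ ca Hx; have h2 := IHb _ cb Hy.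
  rewrite size_tintc; [rewrite h1 h2; lia|rewrite h1; lia|by rewrite h2].
Qed.

Lemma Mg_mono (Sigma N : finType) (rk : N -> nat) (g g' : N -> tup Sigma -> Prop) h T w :
  (forall C x, g C x -> g' C x) -> Mg rk g h T w -> Mg rk g' h T w.
Proof.
move=> H [x [Hx ->]]; exists x; split=> //.
by case: h Hx => [B [Hb Hs]|//]; split=> //; exact: H.
Qed.

Lemma trank_dec (Sigma : finType) (s : seq (xtok Sigma)) : trank (dec s) = cS s.
Proof. by rewrite /trank size_dec. Qed.

Lemma wf_dec (Sigma : finType) (s : seq (xtok Sigma)) : tup_wf (dec s).
Proof. by rewrite /tup_wf size_dec. Qed.

Section Main.
Variables (Sigma : finType) (k : nat) (G : dcfg Sigma).
Hypotheses (HG : is_kdcfg k G) (HL : linear_dcfg G).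
Notation N := (nt G).
Notation rk := (@nrk Sigma G).
Notation P := (rules G).
Notation xt := (xtok Sigma).
Notation tup := (tup Sigma).

Definition nP := size P.
Definition R (i : 'I_nP) : N * term Sigma N := tnth (in_tuple P) i.
Definition bh i := hole (R i).2.
Definition T0 i := tmpl rk (R i).2.
Definition Tc i s := iter s (@nextT Sigma) (T0 i).
Definition F := (\max_(i < nP) meas (T0 i)).+1.
Definition N' : finType := (N + 'I_nP * 'I_F.+1)%type.
Definition isDone (T : seq xt) := if stepT T is SDone then true else false.
Definition nm i s : N' :=
  if isDone (Tc i s) then (if bh i is Some B then inl B else inr (i, inord s)) else inr (i, inord s).
Definition mk (o : pop Sigma) (Y : term Sigma N') : term Sigma N' :=
  match o with
  | PPre c => Cat (Tup (dec [:: c])) Y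
  | PPost c => Cat Y (Tup (dec [:: c]))
  | PMid j v => Intc j Y (Tup (dec v))
  end.
Definition rhs i s : term Sigma N' :=
  match stepT (Tc i s) with
  | SFin u => Tup u
  | SPeel o _ => mk o (NT (nm i s.+1))
  | SDone => Tup teps
  end.
Definition isunit i := isDone (T0 i).
Definition e : rel N := fun A C =>
  has (fun i => ((R i).1 == A) && isunit i && (bh i == Some C)) (enum 'I_nP).
Definition rk' (X : N') : nat := match X with inl A => rk A | inr (i, s) => cS (Tc i s) end.
Definition P1' : seq (N' * term Sigma N') :=
  List.flat_map (fun A => List.flat_map (fun i =>
    if connect e A (R i).1 && ~~ isunit i then [:: (inl A, rhs i 0)] else [::])
    (enum 'I_nP)) (enum N).
Definition P2' : seq (N' * term Sigma N') :=
  List.flat_map (fun i => List.flat_map (fun s : 'I_F.+1 =>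
    if (0 < s < F) && ~~ isDone (Tc i s) then [:: (inr (i, s), rhs i s)] else [::])
    (enum 'I_F.+1)) (enum 'I_nP).
Definition P' := P1' ++ P2'.
Definition G' : dcfg Sigma := @Dcfg Sigma N' rk' P' (inl (start G)).

Lemma R_in i : List.In (R i) P.
Proof. rewrite /R (tnth_nth (R i)); exact: In_nth. Qed.

Lemma In_R r : List.In r P -> exists i, R i = r.
Proof.
move=> Hr; have [n [H1 H2]] := nth_In Hr; exists (Ordinal H1).
by rewrite /R (tnth_nth r).
Qed.

Lemma R_ok i : [/\ correct rk k (R i).2, rank rk (R i).2 = rk (R i).1 & nnt (R i).2 <= 1].
Proof.
have [_ H] := HG; have [H1 H2 _] := H _ (R_in i).
by split=> //; exact: HL (R_in i).
Qed.

Lemma T0_props i : [/\ cS (T0 i) = rk (R i).1, cH (T0 i) = hcnt rk (bh i)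
   & (if bh i is Some B then rk B <= k else True)].
Proof.
have [c r n] := R_ok i; have [S H K _] := tmpl_props c n.
by split=> //; rewrite /T0 S.
Qed.

Lemma rkA_le i : rk (R i).1 <= k.
Proof. have [c <- _] := R_ok i; exact: correct_rank c. Qed.

Lemma Tc_succ i s : Tc i s.+1 = nextT (Tc i s).
Proof. by rewrite /Tc iterS. Qed.

Lemma chain_inv i s : cH (Tc i s) = hcnt rk (bh i) /\ cS (Tc i s) <= k.
Proof.
elim: s => [|s [IH1 IH2]].
- have [S H _] := T0_props i; split=> //; rewrite /Tc /= S; exact: rkA_le.
- rewrite Tc_succ /nextT; case E: (stepT (Tc i s)) => [u|o T'|] //.
  have Hp := stepT_peel E.
  rewrite (peel_cH Hp); split=> //.
  have [_ _ K] := T0_props i.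
  case: (peel_rank Hp) => H; first lia.
  move: H; rewrite IH1; case: (bh i) K => [B|] /= K; lia.
Qed.

Lemma done_info i s : isDone (Tc i s) -> exists B, bh i = Some B /\ Tc i s = idT Sigma (rk B).
Proof.
rewrite /isDone; case E: (stepT (Tc i s)) => // _.
have [E1 E2] := stepT_done E; have [H _] := chain_inv i s.
move: E2; rewrite H; case: (bh i) => [B|] //= [EB].
by exists B; split=> //; rewrite {1}E1 EB.
Qed.

Lemma F_bound i : meas (T0 i) < F.
Proof. rewrite /F ltnS; exact: (leq_bigmax_cond (F := fun i => meas (T0 i))). Qed.

Lemma gen_size A w : gen P A w -> size w = (rk A).+1.
Proof.
case=> n; elim: n A w => [//|n IH] A w /= [b [Hin Hv]].
have [_ H] := HG; have [c r _] := H _ Hin.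
by rewrite (valg_size IH c Hv) r.
Qed.

Lemma genN_size n A w : genN P n A w -> size w = (rk A).+1.
Proof. by move=> H; apply: gen_size; exists n. Qed.

Lemma mk_val (g : N' -> tup -> Prop) o Y w :
  valg g (mk o (NT Y)) w <-> exists y, g Y y /\ w = opval o y.
Proof.
case: o => [c|c|j v] /=; split.
- by case=> x [y [-> [Hy ->]]]; exists y.
- by case=> y [Hy ->]; exists (dec [:: c]), y.
- by case=> x [y [Hx [-> ->]]]; exists x.
- by case=> y [Hy ->]; exists y, (dec [:: c]).
- by case=> x [y [Hx [-> ->]]]; exists x.
- by case=> y [Hy ->]; exists y, (dec v).
Qed.

(* soundness *)
Definition M (X : N') (w : tup) : Prop :=
  match X with
  | inl A => gen P A w
  | inr (i, s) => Mg rk (gen P) (bh i) (Tc i s) w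
  end.

Lemma inordS i s : s < F -> Tc i (@inord F s.+1) = Tc i s.+1.
Proof. by move=> h; rewrite inordK. Qed.

Lemma rhs_sound (g' : N' -> tup -> Prop) i s w :
  ~~ isDone (Tc i s) -> s < F -> (forall Y y, g' Y y -> M Y y) ->
  valg g' (rhs i s) w -> Mg rk (gen P) (bh i) (Tc i s) w.
Proof.
move=> nd sF HM; rewrite /rhs; case E: (stepT (Tc i s)) => [u|o T'|].
- have [-> H0 _] := stepT_fin E; move=> /= ->.
  have [H _] := chain_inv i s; rewrite H0 in H.
  case Eb: (bh i) H => [B|] //= _.
  by exists [::]; split=> //; rewrite fill_noH.
- move/mk_val=> [y [Hy ->]].
  have Hp := stepT_peel E.
  have ET : Tc i s.+1 = T' by rewrite Tc_succ /nextT E.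
  move: (HM _ _ Hy); rewrite /nm.
  case D: (isDone (Tc i s.+1)).
  + have [B [Eb ED]] := done_info D; rewrite Eb /= => Hg.
    exists y; split; first by split=> //; exact: gen_size.
    by rewrite (peel_op _ Hp) -ET ED dec_idT //; exact: gen_size.
  + rewrite /= inordS // ET => [[x [Hx ->]]].
    by exists x; split=> //; rewrite (peel_op _ Hp).
- by rewrite /isDone E in nd.
Qed.

Lemma unit_edge A C w : e A C -> gen P C w -> gen P A w.
Proof.
case/hasP=> i _ /andP [/andP [/eqP EA U] /eqP EB] Hg.
have [c r n] := R_ok i.
have Hin := R_in i; rewrite [R i]surjective_pairing in Hin.
rewrite EA in Hin; apply: gen_rule Hin _.
apply/(tmpl_sem _ c n gen_size); rewrite -/(bh i) EB.
exists w; split; first by split=> //; exact: gen_size.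
have [B [EB' ED]] := done_info (s := 0) U; rewrite EB in EB'; case: EB' => EBC; rewrite -EBC in ED.
by move: ED; rewrite /Tc /= /T0 => ->; rewrite dec_idT //; exact: gen_size.
Qed.

Lemma connect_gen A C w : connect e A C -> gen P C w -> gen P A w.
Proof.
move/connectP=> [p Hp ->]; elim: p A Hp => [//|D p IH] A /= /andP [eAD Hp] Hg.
apply: unit_edge eAD _; exact: IH.
Qed.

Lemma In_P'_inv X b : List.In (X, b) P' ->
  (exists A i, [/\ X = inl A, b = rhs i 0, connect e A (R i).1 & ~~ isunit i]) \/
  (exists i (s : 'I_F.+1), [/\ X = inr (i, s), b = rhs i s, 0 < s < F & ~~ isDone (Tc i s)]).
Proof.
rewrite /P' List.in_app_iff => [[]].
- move/List.in_flat_map=> [A [_ /List.in_flat_map [i [_ H]]]].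
  case: ifP H => [/andP [H1 H2]|_] //= [E|//].
  by left; exists A, i; case: E => <- <-.
- move/List.in_flat_map=> [i [_ /List.in_flat_map [s [_ H]]]].
  case: ifP H => [/andP [H1 H2]|_] //= [E|//].
  by right; exists i, s; case: E => <- <-.
Qed.

Lemma sound n X w : genN P' n X w -> M X w.
Proof.
elim: n X w => [//|n IH] X w /= [b [Hin Hv]].
case: (In_P'_inv Hin) => [[A [i [-> Eb Hc Hu]]]|[i [s [-> Eb /andP [s0 sF] Hd]]]];
  rewrite Eb in Hv.
- have Hm := rhs_sound (s := 0) Hu (ltn0Sn _) IH Hv.
  apply: (connect_gen Hc).
  have [c r nn] := R_ok i.
  have Hin2 := R_in i; rewrite [R i]surjective_pairing in Hin2.
  apply: gen_rule Hin2 _.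
  exact/(tmpl_sem _ c nn gen_size).
- exact: rhs_sound Hd sF IH Hv.
Qed.

(* completeness *)
Definition Mg' h T w := Mg rk (fun B y => gen P' (inl B) y) h T w.

Lemma In_P1 A i : connect e A (R i).1 -> ~~ isunit i -> List.In (inl A, rhs i 0) P'.
Proof.
move=> H1 H2; rewrite /P' List.in_app_iff; left.
apply/List.in_flat_map; exists A; split; first exact: In_enum.
apply/List.in_flat_map; exists i; split; first exact: In_enum.
by rewrite H1 H2; left.
Qed.

Lemma In_P2 i (s : 'I_F.+1) : 0 < s < F -> ~~ isDone (Tc i s) -> List.In (inr (i, s), rhs i s) P'.
Proof.
move=> H1 H2; rewrite /P' List.in_app_iff; right.
apply/List.in_flat_map; exists i; split; first exact: In_enum.
apply/List.in_flat_map; exists s; split; first exact: In_enum.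
by rewrite H1 H2; left.
Qed.

Lemma step_compl i s X w : List.In (X, rhs i s) P' -> ~~ isDone (Tc i s) ->
  (forall o T', stepT (Tc i s) = SPeel o T' ->
     forall y, Mg' (bh i) (Tc i s.+1) y -> gen P' (nm i s.+1) y) ->
  Mg' (bh i) (Tc i s) w -> gen P' X w.
Proof.
move=> Hin nd Hnext [x [Hx Ew]]; apply: gen_rule Hin _.
rewrite /rhs; case E: (stepT (Tc i s)) => [u|o T'|].
- have [-> H0 _] := stepT_fin E; by rewrite /= Ew fill_noH.
- apply/mk_val; exists (dec (fill T' x)); split.
  + apply: (Hnext _ _ E); exists x; split=> //; by rewrite Tc_succ /nextT E.
  + by rewrite Ew (peel_op _ (stepT_peel E)).
- by rewrite /isDone E in nd.
Qed.

Lemma chain_compl i d : forall s, meas (Tc i s) = d -> s + meas (Tc i s) <= meas (T0 i) ->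
  0 < s -> forall w, Mg' (bh i) (Tc i s) w -> gen P' (nm i s) w.
Proof.
elim/ltn_ind: d => d IH s Em Hs s0 w Hm.
rewrite /nm; case D: (isDone (Tc i s)).
- have [B [Eb ED]] := done_info D; rewrite Eb.
  move: Hm; rewrite /Mg' /Mg Eb => [[x [[Hx Hsz] ->]]].
  by rewrite ED dec_idT.
- have sF : s < F by have := F_bound i; lia.
  apply: (step_compl (s := s)).
  + have := In_P2 (i := i) (s := inord s); rewrite inordK; last lia.
    apply; [lia | by rewrite D].
  + by rewrite D.
  + move=> o T' E y Hy.
    have Hp := stepT_peel E; have Hme := peel_meas Hp.
    have ET : Tc i s.+1 = T' by rewrite Tc_succ /nextT E.
    apply: (IH (meas T')) => //; rewrite ?ET; lia.
  + exact: Hm.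
Qed.

Lemma transfer A B w : e A B -> gen P' (inl B) w -> gen P' (inl A) w.
Proof.
move=> eAB [[|n] //= [b [Hin Hv]]].
case: (In_P'_inv Hin) => [[A0 [i [EA Eb Hc Hu]]]|[i [s [EX _ _ _]]]] //.
case: EA => EA; rewrite -EA in Hc.
exists n.+1, b; split=> //; rewrite Eb; apply: In_P1 Hu.
exact: connect_trans (connect1 eAB) Hc.
Qed.

Lemma compl n A w : genN P n A w -> gen P' (inl A) w.
Proof.
elim: n A w => [//|n IH] A w /= [b [Hin Hv]].
have [i Ei] := In_R Hin.
have [c r nn] := R_ok i; rewrite Ei /= in c r nn.
have Hm : Mg rk (genN P n) (bh i) (T0 i) w.
  by rewrite /bh /T0 Ei /=; exact/(tmpl_sem _ c nn (@genN_size n)).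
have Hm' : Mg' (bh i) (T0 i) w := Mg_mono IH Hm.
case U: (isunit i).
- have [B [Eb ED]] := done_info (s := 0) U.
  move: Hm'; rewrite /Mg' /Mg Eb => [[x [[Hx Hsz] ->]]].
  have -> : T0 i = idT Sigma (rk B) by exact: ED.
  rewrite dec_idT //; apply: transfer Hx.
  apply/hasP; exists i; first by rewrite mem_enum.
  by rewrite Ei U Eb /= !eqxx.
- apply: (step_compl (i := i) (s := 0)).
  + by apply: In_P1; [rewrite Ei; exact: connect0 | rewrite U].
  + by move: U; rewrite /isunit /Tc /= => ->.
  + move=> o T' E y Hy.
    have Hme := peel_meas (stepT_peel E).
    have ET : Tc i 1 = T' by rewrite Tc_succ /nextT E.
    apply: (chain_compl (d := meas (Tc i 1)) (s := 1)) => //.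
    rewrite ET; move: Hme; rewrite /Tc /=; lia.
  + exact: Hm'.
Qed.

(* well-formedness *)
Lemma rk_edge A C : e A C -> rk A = rk C.
Proof.
case/hasP=> i _ /andP [/andP [/eqP EA U] /eqP EB].
have [S _ _] := T0_props i.
have [B [EB' ED]] := done_info (s := 0) U; rewrite EB in EB'; case: EB' => EBC.
rewrite -EA -S; move: ED; rewrite /Tc /= => ->; by rewrite cS_idT EBC.
Qed.

Lemma rk_connect A C : connect e A C -> rk A = rk C.
Proof.
move/connectP=> [p Hp ->]; elim: p A Hp => [//|D p IH] A /= /andP [eAD Hp].
by rewrite (rk_edge eAD) (IH _ Hp).
Qed.

Lemma nm_rk i s : s < F -> rk' (nm i s.+1) = cS (Tc i s.+1).
Proof.
move=> sF; rewrite /nm; case D: (isDone (Tc i s.+1)).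
- have [B [Eb ED]] := done_info D; by rewrite Eb ED cS_idT.
- by rewrite /= inordK.
Qed.

Lemma rule_ok i s (X : N') : ~~ isDone (Tc i s) -> s < F -> rk' X = cS (Tc i s) ->
  [/\ correct rk' k (rhs i s), rank rk' (rhs i s) = rk' X, leaves_short (rhs i s)
    & normal_rule (X, rhs i s)].
Proof.
move=> nd sF HX; have [_ Hk] := chain_inv i s.
rewrite /rhs; case E: (stepT (Tc i s)) => [u|o T'|].
- have [-> H0 HL1] := stepT_fin E.
  rewrite /= wf_dec trank_dec HX tlen_dec; split=> //.
  by right; right; exists (dec (Tc i s)); split=> //; rewrite tlen_dec.
- have Hp := stepT_peel E.
  have ET : Tc i s.+1 = T' by rewrite Tc_succ /nextT E.
  have RY : rk' (nm i s.+1) = cS T' by rewrite nm_rk // ET.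
  have [_ Hk'] := chain_inv i s.+1; rewrite ET in Hk'.
  move: RY; set Y := nm i s.+1 => RY.
  have mid : forall p v q, Tc i s = p ++ v ++ q -> T' = p ++ XS :: q -> cL v <= 1 ->
    [/\ correct rk' k (mk (PMid (cS p).+1 v) (NT Y)), rank rk' (mk (PMid (cS p).+1 v) (NT Y)) = rk' X,
        leaves_short (mk (PMid (cS p).+1 v) (NT Y)) & normal_rule (X, mk (PMid (cS p).+1 v) (NT Y))].
    move=> p v q E1 E2 Lv.
    move: Hk Hk' HX; rewrite E1 E2 !cS_cat /= => Hk Hk' HX.
    change (mk (PMid (cS p).+1 v) (NT Y)) with (Intc (cS p).+1 (NT Y) (Tup (dec v))).
    have := wf_dec v; have := trank_dec v; have := tlen_dec v.
    generalize (dec v) => u Hl Ht Hw.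
    rewrite /= Hw Ht RY E2 !cS_cat Hl /= HX; split.
    + apply/and5P; split=> //; clear - Hk Hk' HX; lia.
    + clear - Hk Hk' HX; lia.
    + exact: Lv.
    + by right; left; exists Y, (cS p).+1, u; split=> //; rewrite Hl.
  case: (peel_cases Hp).
  + case=> c [ET0 -> Hc].
    have cSc : cS (Tc i s) = cS [:: c] + cS T' by rewrite ET0 -cat1s cS_cat.
    have Lc : cL [:: c] <= 1 by case: Hc => [->|[a ->]].
    have Nc : dec [:: c] <> teps by case: Hc => [->|[a ->]].
    change (mk (PPre c) (NT Y)) with (Cat (Tup (dec [:: c])) (NT Y)).
    have := wf_dec [:: c]; have := trank_dec [:: c]; have := tlen_dec [:: c].
    move: Nc; generalize (dec [:: c]) => u Nc Hl Ht Hw.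
    rewrite /= Hw Ht RY Hl; split.
    * apply/and3P; split=> //; [apply/andP; split=> //|]; clear - cSc Hk Hk' HX; lia.
    * clear - cSc Hk Hk' HX; lia.
    * by rewrite Lc.
    * by left; exists Y, u; split; [left|split=> //; rewrite Hl].
  + case=> c [ET0 -> Hc].
    have cSc : cS (Tc i s) = cS T' + cS [:: c] by rewrite ET0 cS_cat.
    have Lc : cL [:: c] <= 1 by case: Hc => [->|[a ->]].
    have Nc : dec [:: c] <> teps by case: Hc => [->|[a ->]].
    change (mk (PPost c) (NT Y)) with (Cat (NT Y) (Tup (dec [:: c]))).
    have := wf_dec [:: c]; have := trank_dec [:: c]; have := tlen_dec [:: c].
    move: Nc; generalize (dec [:: c]) => u Nc Hl Ht Hw.
    rewrite /= Hw Ht RY Hl; split.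
    * apply/and3P; split=> //; [apply/andP; split=> //|]; clear - cSc Hk Hk' HX; lia.
    * clear - cSc Hk Hk' HX; lia.
    * by rewrite Lc.
    * by left; exists Y, u; split; [right|split=> //; rewrite Hl].
  + case=> p [v [q [E1 E2 -> E3 _]]]; apply: mid E1 E2 _.
    by have [_ [->|[a [->|->]]]] := sc3_spec E3.
  + case=> p [v [q [E1 E2 -> E4 _]]]; apply: mid E1 E2 _.
    by have [_ [p0 [_ [[-> _]|[a ->]]]]] := sc4_spec E4.
- by rewrite /isDone E in nd.
Qed.

Lemma all_rules_ok r : List.In r P' ->
  [/\ correct rk' k r.2, rank rk' r.2 = rk' r.1, leaves_short r.2 & normal_rule r].
Proof.
case: r => X b Hin; case: (In_P'_inv Hin) => [[A [i [-> -> Hc Hu]]]|[i [s [-> -> /andP [s0 sF] Hd]]]].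
- have Hrk : rk' (inl A) = cS (Tc i 0).
    by have [S _ _] := T0_props i; rewrite /= (rk_connect Hc) -S.
  exact: (@rule_ok i 0 (inl A) Hu (ltn0Sn _) Hrk).
- exact: (@rule_ok i s (inr (i, s)) Hd sF (erefl _)).
Qed.

End Main.

Theorem lemma1 (Sigma : finType) (k : nat) (G : dcfg Sigma) :
  is_kdcfg k G -> linear_dcfg G ->
  exists G' : dcfg Sigma,
    [/\ is_kdcfg k G',
        (forall w, language G w <-> language G' w)
      & forall r, List.In r (rules G') -> normal_rule r].
Proof.
move=> HG HL; exists (G' G); split.
- split; first by case: HG.
  by move=> r Hr; have [? ? ? _] := all_rules_ok HG HL Hr.
- move=> w; rewrite /language !lang_gen; split.
  + by case=> n /(compl HG HL).
  + by case=> n /(sound HG HL).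
- by move=> r Hr; have [_ _ _ ?] := all_rules_ok HG HL Hr.
Qed.
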